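(* Let $u_1,\dots,u_n$ be words over $[n]$ with $u_j\in[n]^{k_j}$ ($k_j\geq0$). Then \[ P\left(\begin{bmatrix}e_{u_1}\\ \vdots\\ e_{u_n}\end{bmatrix}\right)=\sum_{j=1}^n\frac{\delta^l(l_{ju_j})[1\oplus\cdots\oplus1]}{k_j+1}, \] where $P$ is the orthogonal projection of $\mathcal{F}(\mathbb{C}^n)^n$ onto the closure of $\delta^l(\mathbb{C}^l_{\langle n\rangle})[1\oplus\cdots\oplus1]$ and $ju_j$ denotes the word obtained by prefixing the letter $j$ to $u_j$.
   Context: Let $\{e_1,\dots,e_n\}$ be an orthonormal basis of $\mathbb{C}^n$, $\{f_1,\dots,f_n\}$ the standard basis. The full Fock space is $\mathcal{F}(\mathbb{C}^n)=\mathbb{C}1\oplus\bigoplus_{k\geq1}(\mathbb{C}^n)^{\otimes k}$; for a word $w=i_1\cdots i_k$ over $[n]=\{1,\dots,n\}$, $e_w=e_{i_1}\otimes\cdots\otimes e_{i_k}$, $e_\epsilon=1$ for the empty word; $[n]^k$ is the set of words of length $k$. Let $l_je_w=e_{jw}$ be the left creation operators and $l_u=l_{u_1}\cdots l_{u_p}$ for $u=u_1\cdots u_p$. Let $\mathbb{C}^l_{\langle n\rangle}$ be the unital algebra generated by $l_1,\dots,l_n$, and $\delta^l:\mathbb{C}^l_{\langle n\rangle}\to(\mathbb{C}^l_{\langle n\rangle})^n\cong\mathbb{C}^l_{\langle n\rangle}\otimes\mathbb{C}^n$ the linear map with $\delta^l(l_{i_1}\cdots l_{i_p})=\sum_{j=1}^p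 l_{i_{j+1}}\cdots l_{i_p}l_{i_1}\cdots l_{i_{j-1}}\otimes f_{i_j}$. For a tuple $(x_1,\dots,x_n)$ of operators, $(x_1,\dots,x_n)[1\oplus\cdots\oplus1]=(x_11,\dots,x_n1)\in\mathcal{F}(\mathbb{C}^n)^n$, and $\delta^l(\mathbb{C}^l_{\langle n\rangle})[1\oplus\cdots\oplus1]$ is the set of all such images of $\delta^l(q)$, $q\in\mathbb{C}^l_{\langle n\rangle}$. Vectors of $\mathcal{F}(\mathbb{C}^n)^n$ are identified with $\mathcal{F}(\mathbb{C}^n)\otimes\mathbb{C}^n$ via $(\xi_1,\dots,\xi_n)\mapsto\sum_j\xi_j\otimes f_j$. *)

(* Defs.v *)
(* Complex scalars: any numClosedFieldType C (e.g. algC, or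
   complex numbers); only ring operations, conjugation and the real order on
   C are used. *)
From mathcomp Require Import all_boot all_order all_algebra.
Set Implicit Arguments. Unset Strict Implicit. Unset Printing Implicit Defensive.
Import Order.TTheory GRing.Theory Num.Theory.
Local Open Scope ring_scope.

Section Fock.
Variables (C : numClosedFieldType) (n : nat).

(* A vector of the full Fock space F(C^n), given by its coordinates on the
   orthonormal basis (e_w)_w indexed by words w over [n] = 'I_n. *)
Definition fock := seq 'I_n -> C.

Definition fvec := 'I_n -> fock.

Definition ebasis (w : seq 'I_n) : fock := fun w' => (w' == w)%:R.
Definition vac : fock := ebasis [::].

(* left creation operator l_j : e_w |-> e_{jw} *)
Definition lcre (j : 'I_n) (xi : fock) : fock :=
  fun w' => match w' with
            | [::] => 0
            | j' :: w'' => if j' == j then xi w'' else 0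
            end.

Definition lword (u : seq 'I_n) (xi : fock) : fock := foldr lcre xi u.

(* delta^l(l_{i_1} ... l_{i_p}) [1 (+) ... (+) 1]
   = sum_{k} (l_{i_{k+1}..i_p} l_{i_1..i_{k-1}} 1) (x) f_{i_k}
   (0-based index k below).  The i-th component collects the terms with
   i_k = i. *)
Definition deltal1 (w : seq 'I_n) : fvec :=
  fun i => fun w' =>
    \sum_(k < size w | nth i w k == i) lword (drop k.+1 w) (lword (take k w) vac) w'.

(* delta^l(C^l_<n>) [1 (+) ... (+) 1] : images of delta^l(q) for
   q = sum_{w in s} c_w l_w an arbitrary element of the algebra generated by
   the l_j (the monomials l_w span it), using linearity of delta^l. *)
Definition deltal_image (v : fvec) : Prop :=
  exists (s : seq (seq 'I_n)) (c : seq 'I_n -> C),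
    forall i w', v i w' = \sum_(p <- s) c p * deltal1 p i w'.

Definition bounded (N : nat) (v : fvec) : Prop :=
  forall i (w : seq 'I_n), (N <= size w)%N -> v i w = 0.
Definition fin_supp (v : fvec) : Prop := exists N, bounded N v.

(* inner product of F(C^n)^n, computed on words of length < N
   (exact as soon as N bounds the supports) *)
Definition ipN (N : nat) (v v' : fvec) : C :=
  \sum_(i < n) \sum_(k < N) \sum_(t : k.-tuple 'I_n) v i t * (v' i t)^*.

Definition vsub (v v' : fvec) : fvec := fun i w => v i w - v' i w.

(* y = P x, where P is the orthogonal projection onto the closure of the
   subspace S: y lies in the (norm) closure of S and x - y is orthogonal to S.
   (Stated for finitely supported x, y, S; all inner products/norms are then
   finite sums.) *)
Definition is_orthproj_closure (S : fvec -> Prop) (x y : fvec) : Prop :=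
  [/\ fin_supp x, fin_supp y,
      (forall eps : C, 0 < eps -> exists s, S s /\ fin_supp s /\
          forall N, bounded N s -> bounded N y -> ipN N (vsub y s) (vsub y s) < eps)
    & (forall s, S s -> fin_supp s /\
          forall N, bounded N s -> bounded N x -> bounded N y ->
            ipN N (vsub x y) s = 0)].

Definition xvec (u : 'I_n -> seq 'I_n) : fvec := fun j => ebasis (u j).

End Fock.

(* Main.v *)
Require Import Defs.
From mathcomp Require Import all_boot all_order all_algebra zify.
Import Order.TTheory GRing.Theory Num.Theory.
Local Open Scope ring_scope.
Set Implicit Arguments. Unset Strict Implicit.

Lemma rotZ (T : Type) m' (s : seq T) (a b : 'I_m'.+1) :
  size s = m'.+1 -> rot a (rot b s) = rot (a + b)%R s.
Proof.
move=> Hs; have Ha := ltn_ord a; have Hb := ltn_ord b.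
rewrite rot_add_mod ?Hs; [|exact: ltnW|exact: ltnW].
have -> : nat_of_ord (a + b)%R = ((a + b) %% m'.+1)%N by [].
case: ifP => H.
  rewrite leq_eqVlt in H; case/orP: H => [/eqP E|H].
    by rewrite E modnn rot0 -Hs rot_size.
  by rewrite modn_small.
congr rot.
have E : (a + b = (a + b - m'.+1) + m'.+1)%N by move: H; lia.
by rewrite {2}E modnDr modn_small //; move: H; lia.
Qed.

Lemma rot_count (R : pzSemiRingType) (T : eqType) (p w : seq T) :
  \sum_(k' < size p) \sum_(k'' < size w) ((rot k' p == rot k'' w)%:R : R)
  = (size w)%:R * \sum_(k' < size p) ((rot k' p == w)%:R : R).
Proof.
case: (eqVneq (size p) (size w)) => Hs; last first.
  rewrite big1 ?mulr0_nat.
    by rewrite big1 ?mulr0 // => k _; case: eqP => // E; move: Hs; rewrite -E size_rot eqxx.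
  move=> k _; rewrite big1 // => k' _; case: eqP => // E.
  by move: Hs; rewrite -(size_rot k p) E size_rot eqxx.
have [m Hm] : exists m, size w = m by eexists.
rewrite Hs Hm; case: m Hm => [|m'] Hm; first by rewrite !big_ord0 mulr0.
rewrite Hm in Hs.
transitivity (\sum_(k' < m'.+1) \sum_(k < m'.+1) ((rot k p == w)%:R : R)).
  apply: eq_bigr => k' _.
  rewrite [RHS](reindex_inj (h := fun k'' : 'I_m'.+1 => (- k'' + k')%R)); last first.
    by move=> x y /addIr /oppr_inj.
  apply: eq_bigr => k'' _.
  rewrite -(inj_eq (@rot_inj (-k'')%R _)) !rotZ ?size_rot //.
  by rewrite addNr rot0.
by rewrite sumr_const card_ord mulr_natl.
Qed.

Section S.
Variables (C : numClosedFieldType) (n : nat).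

Lemma lword_eb (a w w' : seq 'I_n) :
  lword a (ebasis C w) w' = (w' == a ++ w)%:R.
Proof.
elim: a w' => [|j a IH] [|j' w'] //.
rewrite /= eqseq_cons; case: eqP => _ //=; exact: IH.
Qed.

Lemma deltal1E (p : seq 'I_n) i (t : seq 'I_n) :
  deltal1 C p i t = \sum_(k < size p) ((i :: t == rot k p)%:R).
Proof.
rewrite /deltal1 big_mkcond; apply: eq_bigr => k _.
rewrite /lword -foldr_cat -/(lword _ _) /vac lword_eb cats0.
rewrite /rot (drop_nth i (ltn_ord k)) cat_cons eqseq_cons eq_sym.
by case: (i == nth i p k).
Qed.

Lemma deltal1cE (p : seq 'I_n) i (t : seq 'I_n) :
  (deltal1 C p i t)^* = \sum_(k < size p) ((i :: t == rot k p)%:R).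
Proof. by rewrite deltal1E rmorph_sum; apply: eq_bigr => k _; rewrite rmorph_nat. Qed.

Definition fv (v : fvec C n) (w : seq 'I_n) : C :=
  match w with [::] => 0 | i :: t => v i t end.

Lemma evalL (v : fvec C n) k (w : seq 'I_n) :
  \sum_(i < n) \sum_(t : k.-tuple 'I_n) v i t * ((i :: t == w)%:R)
  = (size w == k.+1)%:R * fv v w.
Proof.
case: w => [|a w'].
  by rewrite /= mulr0 big1 // => i _; rewrite big1 // => t _ /=; rewrite mulr0n mulr0.
rewrite (bigD1 a) //= [X in _ + X]big1 ?addr0; last first.
  move=> i Hi; rewrite big1 // => t _.
  by rewrite eqseq_cons (negbTE Hi) mulr0.
have -> : (size (a :: w') == k.+1) = (size w' == k) by [].
case: (eqVneq (size w') k) => Hk.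
  pose tw : k.-tuple 'I_n := Tuple (introT eqP Hk).
  rewrite (bigD1 tw) //= [X in _ + X]big1 ?addr0.
    by rewrite eqseq_cons !eqxx /= mulr1 mul1r.
  move=> t Ht; rewrite eqseq_cons eqxx /=; case: eqP => [E|]; last by rewrite mulr0.
  by case/negP: Ht; apply/eqP/val_inj.
rewrite (_ : (false%:R : C) = 0) // mul0r big1 // => t _; rewrite eqseq_cons eqxx /=; case: eqP => [E|]; last by rewrite mulr0.
by move: Hk; rewrite -E size_tuple eqxx.
Qed.

End S.

Section Main.
Variables (C : numClosedFieldType) (n : nat) (u : 'I_n -> seq 'I_n).

Definition yv : fvec C n :=
  fun i w => \sum_(j < n) ((size (u j)).+1%:R)^-1 * deltal1 C (j :: u j) i w.

Lemma fvx w : fv (xvec C u) w = \sum_(j < n) ((w == j :: u j)%:R).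
Proof.
case: w => [|i t].
  by rewrite big1.
rewrite (bigD1 i) //= [X in _ + X]big1 ?addr0.
  by rewrite eqseq_cons eqxx.
by move=> j Hj; rewrite eqseq_cons eq_sym (negbTE Hj).
Qed.

Lemma fvy w : fv yv w = \sum_(j < n) ((size (u j)).+1%:R)^-1 *
   \sum_(k < size (j :: u j)) ((w == rot k (j :: u j))%:R).
Proof.
case: w => [|i t].
  rewrite big1 // => j _; rewrite big1 ?mulr0 // => k _.
  case: eqP => // E; have := congr1 size E; rewrite size_rot //.
by apply: eq_bigr => j _; rewrite deltal1E.
Qed.

Lemma fv_sub (v v' : fvec C n) w : fv (vsub v v') w = fv v w - fv v' w.
Proof. by case: w => [|i t] //=; rewrite subrr. Qed.

Lemma orth_delta p k :
  \sum_(i < n) \sum_(t : k.-tuple 'I_n) vsub (xvec C u) yv i t * (deltal1 C p i t)^* = 0.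
Proof.
under eq_bigr => i _ do under eq_bigr => t _ do rewrite deltal1cE mulr_sumr.
under eq_bigr => i _ do rewrite exchange_big.
rewrite exchange_big /=.
under eq_bigr => k' _ do rewrite evalL size_rot.
rewrite -mulr_sumr.
under eq_bigr => k' _ do rewrite fv_sub fvx fvy.
rewrite sumrB exchange_big [X in _ - X]exchange_big /=.
under [X in _ - X]eq_bigr => j _ do rewrite -mulr_sumr (@rot_count C _ p (j :: u j)) /= mulrA mulVf ?mul1r ?pnatr_eq0 //.
by rewrite subrr mulr0.
Qed.

End Main.

Unset Implicit Arguments.

Theorem corollary3p4 (C : numClosedFieldType) (n : nat) (u : 'I_n -> seq 'I_n) :
  is_orthproj_closure (@deltal_image C n) (xvec C u)
    (fun i w => \sum_(j < n) ((size (u j)).+1%:R)^-1 * deltal1 C (j :: u j) i w).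
Proof.
change (is_orthproj_closure (@deltal_image C n) (xvec C u) (yv C u)).
pose N := (\max_(j < n) (size (u j)).+1)%N.
have HN j : ((size (u j)).+1 <= N)%N by exact: (@leq_bigmax _ (fun j => (size (u j)).+1) j).
have Hy : fin_supp (yv C u).
  exists N => i w Hw; rewrite /yv big1 // => j _.
  rewrite deltal1E big1 ?mulr0 // => k _; case: eqP => // E.
  have := congr1 size E; rewrite size_rot /= => [[E']].
  by have := HN j; rewrite -E'; lia.
split => //.
- exists N => i w Hw; rewrite /xvec /ebasis; case: eqP => // E.
  by have := HN i; rewrite -E; lia.
- move=> eps Heps; exists (yv C u); split; last split => //.
    exists [seq j :: u j | j <- index_enum 'I_n], (fun q => ((size q)%:R)^-1).
    by move=> i w'; rewrite big_map.
  move=> M _ _; rewrite /ipN big1 // => i _; rewrite big1 // => k _.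
  by rewrite big1 // => t _; rewrite /vsub subrr mul0r.
- move=> s [ss [c Hs]]; split.
    exists (\max_(p <- ss) size p)%N => i w Hw; rewrite Hs big_seq big1 // => p Hp.
    rewrite deltal1E big1 ?mulr0 // => k _; case: eqP => // E.
    have := congr1 size E; rewrite size_rot /= => E'.
    have H2 : (size p <= \max_(p <- ss) size p)%N by exact: (@leq_bigmax_seq _ ss predT (@size _) p Hp isT).
    by rewrite -E' in H2; lia.
  move=> M _ _ _; rewrite /ipN exchange_big big1 // => k _.
  under eq_bigr => i _ do under eq_bigr => t _ do
    rewrite Hs rmorph_sum mulr_sumr.
  under eq_bigr => i _ do rewrite exchange_big.
  rewrite exchange_big big1 // => p _.
  under eq_bigr => i _ do under eq_bigr => t _ do rewrite rmorphM mulrCA.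
  under eq_bigr => i _ do rewrite -mulr_sumr.
  by rewrite -mulr_sumr orth_delta mulr0.
Qed.
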